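(* Let $p\in(0,1]$ and let $f:\mathbb{Z}\to\mathbb{R}$ belong to $\ell^p(\mathbb{Z})$. Then $${\rm Var}_p Mf\leq \left(2\sum_{k=0}^{\infty}\frac{2^{p}}{(2k+1)^p(2k+3)^p}\right)^{1/p}\|f\|_{\ell^p(\mathbb{Z})}=:\mathbf{C}_p\|f\|_{\ell^p(\mathbb{Z})},$$ and the constant $\mathbf{C}_p$ is the best possible. Moreover, for $p\in(\frac12,1]$, a function $f\not\equiv 0$ attains equality if and only if $f$ is a delta function, i.e. $f=c\,\mathbf{1}_{\{m\}}$ for some $m\in\mathbb{Z}$ and $c\neq 0$.
   Context: For $f:\mathbb{Z}\to\mathbb{R}$, the centered discrete Hardy–Littlewood maximal function is $Mf(n)=\sup_{r\ge 0}\frac{1}{2r+1}\sum_{k=-r}^{r}|f(n+k)|$ ($r$ integer). $\|f\|_{\ell^p(\mathbb{Z})}=(\sum_{n\in\mathbb{Z}}|f(n)|^p)^{1/p}$ and ${\rm Var}_p g=\left(\sum_{n\in\mathbb{Z}}|g(n+1)-g(n)|^p\right)^{1/p}$. *)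

(* Defs.v *)
From Stdlib Require Import Reals ZArith.
From Coquelicot Require Import Coquelicot.
Open Scope R_scope.

(* x^q for x >= 0, q > 0, with the convention 0^q = 0 (Rpower 0 q would be 1). *)
Definition rpow (x q : R) : R := if Rlt_dec 0 x then Rpower x q else 0.

Definition Rbar_rpow (x : Rbar) (q : R) : Rbar :=
  match x with
  | Finite r => Finite (rpow r q)
  | p_infty => p_infty
  | m_infty => Finite 0
  end.

(* sum over Z of a nonnegative family, as a value in [0, +oo]:
   limit of the symmetric partial sums sum_{n=-N}^{N} a n (monotone). *)
Definition sumZ (a : Z -> R) : Rbar :=
  Lim_seq (fun N : nat =>
    sum_n (fun k : nat => a (Z.of_nat k - Z.of_nat N)%Z) (2 * N)%nat).

Definition sumN (a : nat -> R) : Rbar := Lim_seq (fun N => sum_n a N).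

Definition lp_sum (p : R) (f : Z -> R) : Rbar := sumZ (fun n => rpow (Rabs (f n)) p).

Definition in_lp (p : R) (f : Z -> R) : Prop := is_finite (lp_sum p f).

Definition lp_norm (p : R) (f : Z -> R) : Rbar := Rbar_rpow (lp_sum p f) (/ p).

Definition avg (f : Z -> R) (n : Z) (r : nat) : R :=
  / (2 * INR r + 1) *
  sum_n (fun k : nat => Rabs (f (n + (Z.of_nat k - Z.of_nat r))%Z)) (2 * r)%nat.

(* centered discrete maximal function; the sup (in Rbar) is finite for
   f in l^p, so we take its real part *)
Definition maxf (f : Z -> R) (n : Z) : R := real (Sup_seq (fun r => Finite (avg f n r))).

Definition Var_p (p : R) (g : Z -> R) : Rbar :=
  Rbar_rpow (sumZ (fun n => rpow (Rabs (g (n + 1)%Z - g n)) p)) (/ p).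

Definition Cp (p : R) : Rbar :=
  Rbar_rpow
    (Rbar_mult 2 (sumN (fun k : nat =>
        rpow 2 p / (rpow (2 * INR k + 1) p * rpow (2 * INR k + 3) p))))
    (/ p).

Definition is_delta (f : Z -> R) : Prop :=
  exists (m : Z) (c : R), c <> 0 /\ forall n : Z, f n = (if Z.eqb n m then c else 0).

(* Main.v *)
Require Import Defs.
From Stdlib Require Import Reals ZArith Lra Lia Classical.
From Coquelicot Require Import Coquelicot.
Open Scope R_scope.


Lemma rpow_pos x q : 0 < x -> rpow x q = Rpower x q.
Proof. intros H; unfold rpow; destruct (Rlt_dec 0 x); [reflexivity|lra]. Qed.
Lemma rpow_le0 x q : x <= 0 -> rpow x q = 0.
Proof. intros H; unfold rpow; destruct (Rlt_dec 0 x); [lra|reflexivity]. Qed.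
Lemma Rpower_pos x q : 0 < Rpower x q.
Proof. unfold Rpower; apply exp_pos. Qed.
Lemma rpow_nonneg x q : 0 <= rpow x q.
Proof. unfold rpow; destruct (Rlt_dec 0 x); [left; apply Rpower_pos|lra]. Qed.
Lemma rpow_gt0 x q : 0 < x -> 0 < rpow x q.
Proof. intros H; rewrite rpow_pos; auto; apply Rpower_pos. Qed.
Lemma rpow_le x y q : 0 < q -> 0 <= x <= y -> rpow x q <= rpow y q.
Proof.
  intros Hq [Hx Hy]. destruct (Req_dec x 0).
  - subst. rewrite rpow_le0 by lra. apply rpow_nonneg.
  - rewrite !rpow_pos by lra. apply Rle_Rpower_l; lra.
Qed.
Lemma rpow_lt x y q : 0 < q -> 0 <= x < y -> rpow x q < rpow y q.
Proof.
  intros Hq [Hx Hy]. destruct (Req_dec x 0).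
  - subst. rewrite rpow_le0 by lra. apply rpow_gt0; lra.
  - rewrite !rpow_pos by lra. apply Rlt_Rpower_l; lra.
Qed.
Lemma rpow_mult x y q : 0 <= x -> 0 <= y -> rpow (x*y) q = rpow x q * rpow y q.
Proof.
  intros Hx Hy. destruct (Req_dec x 0). { subst. rewrite Rmult_0_l, !rpow_le0 by lra. lra. }
  destruct (Req_dec y 0). { subst. rewrite Rmult_0_r, (rpow_le0 0) by lra. ring. }
  rewrite !rpow_pos by (try apply Rmult_lt_0_compat; lra).
  rewrite Rpower_mult_distr by lra. reflexivity.
Qed.
Lemma rpow_rpow x p q : 0 <= x -> rpow (rpow x p) q = rpow x (p*q).
Proof.
  intros Hx. destruct (Req_dec x 0).
  - subst. rewrite (rpow_le0 0) by lra. rewrite !rpow_le0 by lra. reflexivity.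
  - rewrite (rpow_pos x) by lra. rewrite !rpow_pos by (try apply Rpower_pos; lra).
    rewrite Rpower_mult. reflexivity.
Qed.
Lemma rpow_one x : 0 <= x -> rpow x 1 = x.
Proof. intros Hx. destruct (Req_dec x 0). subst; apply rpow_le0; lra.
  rewrite rpow_pos by lra. apply Rpower_1; lra. Qed.
Lemma rpow_inv x p : 0 < p -> 0 <= x -> rpow (rpow x p) (/p) = x.
Proof. intros. rewrite rpow_rpow by auto. rewrite Rinv_r by lra. apply rpow_one; auto. Qed.
Lemma rpow_inv' x p : 0 < p -> 0 <= x -> rpow (rpow x (/p)) p = x.
Proof. intros. rewrite rpow_rpow by auto. rewrite Rinv_l by lra. apply rpow_one; auto. Qed.
Lemma rpow_1 q : rpow 1 q = 1.
Proof. rewrite rpow_pos by lra. unfold Rpower. rewrite ln_1, Rmult_0_r. apply exp_0. Qed.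

Lemma Rpower_le_neg a b c : c <= 0 -> 0 < a <= b -> Rpower b c <= Rpower a c.
Proof.
  intros Hc [Ha Hb]. unfold Rpower. destruct (Req_dec a b). subst; lra.
  destruct (Req_dec c 0). subst. rewrite !Rmult_0_l; lra.
  left; apply exp_increasing. assert (ln a < ln b) by (apply ln_increasing; lra). nra.
Qed.

Lemma rpow_subadd x y p : 0 < p <= 1 -> 0 <= x -> 0 <= y -> rpow (x+y) p <= rpow x p + rpow y p.
Proof.
  intros Hp Hx Hy. destruct (Req_dec x 0). { subst. rewrite Rplus_0_l, (rpow_le0 0) by lra. lra. }
  destruct (Req_dec y 0). { subst. rewrite Rplus_0_r, (rpow_le0 0) by lra. lra. }
  rewrite !rpow_pos by lra.
  assert (E: forall z, 0 < z -> Rpower z p = z * Rpower z (p-1)).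
  { intros z Hz. replace p with (1 + (p-1)) at 1 by ring. rewrite Rpower_plus, Rpower_1; auto. }
  rewrite (E (x+y)), (E x), (E y) by lra.
  assert (Rpower (x+y) (p-1) <= Rpower x (p-1)) by (apply Rpower_le_neg; lra).
  assert (Rpower (x+y) (p-1) <= Rpower y (p-1)) by (apply Rpower_le_neg; lra).
  nra.
Qed.

Fixpoint sI (h : Z -> R) (lo : Z) (n : nat) : R :=
  match n with O => 0 | S n => sI h lo n + h (lo + Z.of_nat n)%Z end.

Lemma sI_ext_in h1 h2 lo n : (forall k, (k < n)%nat -> h1 (lo + Z.of_nat k)%Z = h2 (lo + Z.of_nat k)%Z) ->
  sI h1 lo n = sI h2 lo n.
Proof. induction n; simpl; intros H; auto. rewrite IHn, H; auto. Qed.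
Lemma sI_ext h1 h2 lo n : (forall z, h1 z = h2 z) -> sI h1 lo n = sI h2 lo n.
Proof. intros; apply sI_ext_in; auto. Qed.
Lemma sI_le h1 h2 lo n : (forall k, (k < n)%nat -> h1 (lo + Z.of_nat k)%Z <= h2 (lo + Z.of_nat k)%Z) ->
  sI h1 lo n <= sI h2 lo n.
Proof. induction n; simpl; intros H. lra. assert (h1 (lo + Z.of_nat n)%Z <= h2 (lo + Z.of_nat n)%Z) by auto.
  assert (sI h1 lo n <= sI h2 lo n) by auto. lra. Qed.
Lemma sI_lt h1 h2 lo n : (forall k, (k < n)%nat -> h1 (lo + Z.of_nat k)%Z <= h2 (lo + Z.of_nat k)%Z) ->
  (exists k, (k < n)%nat /\ h1 (lo + Z.of_nat k)%Z < h2 (lo + Z.of_nat k)%Z) ->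
  sI h1 lo n < sI h2 lo n.
Proof. induction n; simpl; intros H [k [Hk Hlt]]. lia.
  destruct (Nat.eq_dec k n). subst.
  assert (sI h1 lo n <= sI h2 lo n) by (apply sI_le; auto). lra.
  assert (h1 (lo + Z.of_nat n)%Z <= h2 (lo + Z.of_nat n)%Z) by auto.
  assert (sI h1 lo n < sI h2 lo n) by (apply IHn; eauto; exists k; split; auto; lia). lra. Qed.
Lemma sI_nonneg h lo n : (forall z, 0 <= h z) -> 0 <= sI h lo n.
Proof. intros H. induction n; simpl. lra. specialize (H (lo + Z.of_nat n)%Z). lra. Qed.
Lemma sI_plus h1 h2 lo n : sI (fun z => h1 z + h2 z) lo n = sI h1 lo n + sI h2 lo n.
Proof. induction n; simpl. lra. rewrite IHn; ring. Qed.
Lemma sI_minus h1 h2 lo n : sI (fun z => h1 z - h2 z) lo n = sI h1 lo n - sI h2 lo n.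
Proof. induction n; simpl. lra. rewrite IHn; ring. Qed.
Lemma sI_scal c h lo n : sI (fun z => c * h z) lo n = c * sI h lo n.
Proof. induction n; simpl. lra. rewrite IHn; ring. Qed.
Lemma sI_zero lo n : sI (fun _ => 0) lo n = 0.
Proof. induction n; simpl. lra. rewrite IHn; ring. Qed.
Lemma sI_split h lo n1 n2 : sI h lo (n1 + n2) = sI h lo n1 + sI h (lo + Z.of_nat n1)%Z n2.
Proof. induction n2; simpl. rewrite Nat.add_0_r; lra.
  rewrite Nat.add_succ_r; simpl. rewrite IHn2. rewrite Nat2Z.inj_add, Z.add_assoc. ring. Qed.
Lemma sI_front h lo n : sI h lo (S n) = h lo + sI h (lo+1)%Z n.
Proof. replace (S n) with (1 + n)%nat by lia. rewrite sI_split. simpl. rewrite Z.add_0_r. ring. Qed.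
Lemma sI_sub h lo n lo' n' : (forall z, 0 <= h z) -> (lo' <= lo)%Z -> (lo + Z.of_nat n <= lo' + Z.of_nat n')%Z ->
  sI h lo n <= sI h lo' n'.
Proof.
  intros H H1 H2.
  set (d := Z.to_nat (lo - lo')). set (e := (n' - d - n)%nat).
  assert (n' = d + (n + e))%nat by (unfold e, d; lia).
  rewrite H0, sI_split, sI_split.
  replace (lo' + Z.of_nat d)%Z with lo by (unfold d; lia).
  assert (0 <= sI h lo' d) by (apply sI_nonneg; auto).
  assert (0 <= sI h (lo + Z.of_nat n) e) by (apply sI_nonneg; auto). lra.
Qed.
Lemma sI_shift h lo n s : sI h lo n = sI (fun z => h (z + s)%Z) (lo - s)%Z n.
Proof. induction n; simpl; auto. rewrite IHn. f_equal. f_equal. lia. Qed.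
Lemma sI_refl h c lo n : sI (fun z => h (c - z)%Z) lo n = sI h (c - lo - Z.of_nat n + 1)%Z n.
Proof.
  revert lo. induction n; intros lo; auto.
  replace (sI (fun z => h (c - z)%Z) lo (S n)) with (sI (fun z => h (c-z)%Z) lo n + h (c - (lo + Z.of_nat n))%Z) by reflexivity.
  rewrite sI_front. rewrite IHn. rewrite Rplus_comm. f_equal. f_equal. lia. f_equal. lia.
Qed.
Lemma sI_swap (F : Z -> Z -> R) lo1 n1 lo2 n2 :
  sI (fun a => sI (fun b => F a b) lo2 n2) lo1 n1 = sI (fun b => sI (fun a => F a b) lo1 n1) lo2 n2.
Proof.
  induction n1; simpl. rewrite sI_zero; auto.
  rewrite IHn1. rewrite <- sI_plus. reflexivity.
Qed.
Lemma sI_single h lo n m : (forall z, z <> m -> h z = 0) -> (lo <= m < lo + Z.of_nat n)%Z -> sI h lo n = h m.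
Proof.
  intros H Hm. set (d := Z.to_nat (m - lo)).
  assert (n = d + (1 + (n - d - 1)))%nat by (unfold d; lia).
  rewrite H0, !sI_split. simpl.
  rewrite (sI_ext_in h (fun _ => 0)), sI_zero. 2:{ intros k Hk. apply H. unfold d in Hk. lia. }
  rewrite (sI_ext_in h (fun _ => 0) (lo + Z.of_nat d + Z.of_nat 1)), sI_zero.
  2:{ intros k Hk. apply H. unfold d. lia. }
  replace (lo + Z.of_nat d + 0)%Z with m by (unfold d; lia). ring.
Qed.
Lemma sum_n_sI (u : nat -> R) n : sum_n u n = sI (fun z => u (Z.to_nat z)) 0 (S n).
Proof.
  induction n. rewrite sum_O. simpl. ring_simplify. reflexivity.
  rewrite sum_Sn, IHn. simpl (sI _ 0 (S (S n))). unfold plus; simpl. f_equal. f_equal. lia.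
Qed.
Lemma sum_n_sIZ (F : Z -> R) lo n : sum_n (fun k => F (Z.of_nat k + lo)%Z) n = sI F lo (S n).
Proof.
  rewrite sum_n_sI. rewrite (sI_shift F lo (S n) lo). replace (lo - lo)%Z with 0%Z by lia.
  apply sI_ext_in. intros k Hk. f_equal. lia.
Qed.
Lemma sI_rpow h lo n p : 0 < p <= 1 -> (forall z, 0 <= h z) ->
  rpow (sI h lo n) p <= sI (fun z => rpow (h z) p) lo n.
Proof.
  intros Hp H. induction n; simpl. rewrite rpow_le0; lra.
  eapply Rle_trans. apply rpow_subadd; auto. apply sI_nonneg; auto. lra.
Qed.

Definition SZ (h : Z -> R) (N : nat) : R := sI h (- Z.of_nat N)%Z (2*N+1).

Lemma sumZ_SZ h : sumZ h = Lim_seq (SZ h).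
Proof.
  unfold sumZ. apply Lim_seq_ext. intros N. unfold SZ.
  replace (2*N+1)%nat with (S (2*N)) by lia.
  rewrite <- (sum_n_sIZ h). apply sum_n_ext. intros k. f_equal.
Qed.
Lemma SZ_mono h N : (forall z, 0 <= h z) -> SZ h N <= SZ h (S N).
Proof. intros H. unfold SZ. apply sI_sub; auto; lia. Qed.
Lemma SZ_nonneg h N : (forall z, 0 <= h z) -> 0 <= SZ h N.
Proof. intros; apply sI_nonneg; auto. Qed.
Lemma SZ_le_sumZ h S N : (forall z, 0 <= h z) -> sumZ h = Finite S -> SZ h N <= S.
Proof.
  intros H HS. rewrite sumZ_SZ in HS.
  assert (ex_lim_seq (SZ h)) by (apply ex_lim_seq_incr; intros; apply SZ_mono; auto).
  apply Lim_seq_correct in H0. rewrite HS in H0.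
  apply (is_lim_seq_incr_compare _ _ H0). intros; apply SZ_mono; auto.
Qed.
Lemma sumZ_bounded h B : (forall z, 0 <= h z) -> (forall N, SZ h N <= B) ->
  exists V, sumZ h = Finite V /\ 0 <= V /\ V <= B.
Proof.
  intros H HB. rewrite sumZ_SZ.
  assert (H1 : Rbar_le (Lim_seq (SZ h)) (Lim_seq (fun _ => B))).
  { apply Lim_seq_le_loc. exists O. intros; auto. }
  assert (H2 : Rbar_le (Lim_seq (fun _ => SZ h O)) (Lim_seq (SZ h))).
  { apply Lim_seq_le_loc. exists O. intros n _. induction n. lra.
    eapply Rle_trans; [apply IHn| apply SZ_mono; auto]. }
  rewrite Lim_seq_const in H1, H2.
  assert (0 <= SZ h O) by (apply SZ_nonneg; auto).
  destruct (Lim_seq (SZ h)) as [V| |]; simpl in *; try contradiction.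
  exists V; repeat split; lra.
Qed.
Lemma window_le h S lo n : (forall z, 0 <= h z) -> sumZ h = Finite S -> sI h lo n <= S.
Proof.
  intros H HS. set (N := (Z.to_nat (Z.abs lo) + n)%nat).
  eapply Rle_trans. 2: apply (SZ_le_sumZ h S N); auto.
  unfold SZ. apply sI_sub; auto; unfold N; lia.
Qed.
Lemma point_le h S m : (forall z, 0 <= h z) -> sumZ h = Finite S -> h m <= S.
Proof.
  intros H HS. assert (E: sI h m 1 = h m) by (simpl; rewrite Z.add_0_r; ring).
  rewrite <- E. apply window_le; auto.
Qed.

Definition af (f : Z -> R) (z : Z) : R := Rabs (f z).
Lemma avg_sI f n r : avg f n r = / (2 * INR r + 1) * sI (af f) (n - Z.of_nat r)%Z (2*r+1).
Proof.
  unfold avg. f_equal. replace (2*r+1)%nat with (S (2*r)) by lia.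
  rewrite <- sum_n_sIZ. apply sum_n_ext. intros k. unfold af. f_equal. f_equal. lia.
Qed.
Lemma avg_nonneg f n r : 0 <= avg f n r.
Proof.
  rewrite avg_sI. apply Rmult_le_pos. left; apply Rinv_0_lt_compat.
  pose proof (pos_INR r); lra. apply sI_nonneg. intros; unfold af; apply Rabs_pos.
Qed.

Lemma maxf_attained f n r0 : (forall r, avg f n r <= avg f n r0) -> maxf f n = avg f n r0.
Proof.
  intros H. unfold maxf. rewrite (is_sup_seq_unique _ (Finite (avg f n r0))). reflexivity.
  intros eps. split.
  - intros k. simpl. specialize (H k). destruct eps; simpl; lra.
  - exists r0. simpl. destruct eps; simpl; lra.
Qed.

Lemma argmax_fin (u : nat -> R) Rm : exists r0, (r0 <= Rm)%nat /\ forall r, (r <= Rm)%nat -> u r <= u r0.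
Proof.
  induction Rm. exists O. split; auto. intros r Hr. replace r with O by lia. lra.
  destruct IHRm as [r0 [H1 H2]]. destruct (Rle_dec (u (S Rm)) (u r0)).
  - exists r0. split. lia. intros r1 Hr. destruct (Nat.eq_dec r1 (S Rm)). subst; auto. apply H2; lia.
  - exists (S Rm). split. lia. intros r1 Hr. destruct (Nat.eq_dec r1 (S Rm)). subst; lra.
    specialize (H2 r1 ltac:(lia)). lra.
Qed.

Lemma attain f n B : (forall r, sI (af f) (n - Z.of_nat r)%Z (2*r+1) <= B) ->
  exists r0, forall r, avg f n r <= avg f n r0.
Proof.
  intros HB. destruct (classic (forall r, avg f n r <= avg f n O)) as [H|H].
  { exists O; auto. }
  apply not_all_ex_not in H. destruct H as [r1 Hr1]. apply Rnot_le_lt in Hr1.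
  pose proof (avg_nonneg f n O). set (al := avg f n r1) in *.
  destruct (archimed (B / al)) as [Ha _].
  set (Rm := Z.to_nat (up (B / al))).
  assert (HR : forall r, (Rm <= r)%nat -> avg f n r < al).
  { intros r Hr. rewrite avg_sI. specialize (HB r).
    assert (IZR (up (B/al)) <= INR r).
    { destruct (Z_le_gt_dec 0 (up (B/al))).
      rewrite <- (Z2Nat.id (up (B/al))) by lia. rewrite <- INR_IZR_INZ. apply le_INR. auto.
      apply Rle_trans with 0. apply IZR_le; lia. apply pos_INR. }
    assert (B / al < INR r) by lra.
    assert (0 < al) by lra.
    assert (B < INR r * al) by (apply (Rmult_lt_compat_r al) in H1; auto; unfold Rdiv in H1;
       rewrite Rmult_assoc, Rinv_l, Rmult_1_r in H1 by lra; lra).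
    assert (0 < 2 * INR r + 1) by (pose proof (pos_INR r); lra).
    apply Rmult_lt_reg_l with (2 * INR r + 1); auto. rewrite <- Rmult_assoc, Rinv_r, Rmult_1_l by lra.
    assert (0 <= INR r) by apply pos_INR. nra. }
  destruct (argmax_fin (avg f n) Rm) as [r0 [H1 H2]].
  exists r0. intros r. destruct (le_lt_dec r Rm). auto.
  assert (Hr1m : (r1 <= Rm)%nat). { destruct (le_lt_dec r1 Rm); auto. specialize (HR r1 ltac:(lia)). unfold al in HR. lra. }
  specialize (H2 r1 Hr1m). specialize (HR r ltac:(lia)). unfold al in *. lra.
Qed.

Definition wf (p : R) (f : Z -> R) (z : Z) : R := rpow (Rabs (f z)) p.
Lemma wf_nonneg p f z : 0 <= wf p f z.
Proof. apply rpow_nonneg. Qed.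
Lemma af_nonneg f z : 0 <= af f z.
Proof. apply Rabs_pos. Qed.

Lemma a_le_w p f S z : 0 < p <= 1 -> sumZ (wf p f) = Finite S ->
  af f z <= wf p f z * Rpower (Rmax 1 S) (/p - 1).
Proof.
  intros Hp HS. unfold af. destruct (Req_dec (f z) 0).
  { rewrite H, Rabs_R0. apply Rmult_le_pos. apply wf_nonneg. left; apply Rpower_pos. }
  assert (Ha : 0 < Rabs (f z)) by (apply Rabs_pos_lt; auto).
  assert (Hw : 0 < wf p f z) by (apply rpow_gt0; auto).
  assert (HwS : wf p f z <= S) by (apply point_le; auto; intros; apply wf_nonneg).
  rewrite <- (rpow_inv (Rabs (f z)) p) at 1 by lra. fold (wf p f z).
  rewrite rpow_pos by auto. replace (/p) with (1 + (/p - 1)) at 1 by ring.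
  rewrite Rpower_plus, Rpower_1 by auto. apply Rmult_le_compat_l. lra.
  apply Rle_Rpower_l. assert (1 <= /p). { rewrite <- Rinv_1. apply Rinv_le_contravar; lra. } lra.
  split; auto. pose proof (Rmax_r 1 S). lra.
Qed.

Lemma attain_lp p f : 0 < p <= 1 -> in_lp p f -> forall n, exists r0, forall r, avg f n r <= avg f n r0.
Proof.
  intros Hp Hf n. unfold in_lp, lp_sum in Hf.
  set (S := real (sumZ (fun n => rpow (Rabs (f n)) p))) in *.
  assert (HS : sumZ (wf p f) = Finite S) by (unfold wf; symmetry; auto).
  apply (attain f n (Rpower (Rmax 1 S) (/p-1) * S)).
  intros r. apply Rle_trans with (sI (fun z => Rpower (Rmax 1 S) (/p-1) * wf p f z) (n - Z.of_nat r) (2*r+1)).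
  apply sI_le. intros. rewrite Rmult_comm. apply a_le_w; auto.
  rewrite sI_scal. apply Rmult_le_compat_l. left; apply Rpower_pos.
  apply window_le; auto. intros; apply wf_nonneg.
Qed.

Definition cc (k : nat) : R := 2 / ((2 * INR k + 1) * (2 * INR k + 3)).
Definition gk (p : R) (k : nat) : R := rpow (cc k) p.
Definition dist (j : Z) : nat := if (j <=? 0)%Z then Z.to_nat (- j) else Z.to_nat (j - 1).
Definition Kf (p : R) (j : Z) : R := gk p (dist j).

Lemma cc_pos k : 0 < cc k.
Proof. unfold cc. pose proof (pos_INR k). apply Rdiv_lt_0_compat. lra. nra. Qed.
Lemma cc_lt k l : (k < l)%nat -> cc l < cc k.
Proof.
  intros H. apply lt_INR in H. pose proof (pos_INR k). unfold cc.
  apply Rmult_lt_compat_l. lra. apply Rinv_lt_contravar. nra. nra.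
Qed.
Lemma gk_pos p k : 0 < gk p k.
Proof. apply rpow_gt0, cc_pos. Qed.
Lemma gk_lt p k l : 0 < p -> (k < l)%nat -> gk p l < gk p k.
Proof. intros. apply rpow_lt; auto. split. left; apply cc_pos. apply cc_lt; auto. Qed.
Lemma gk_le p k l : 0 < p -> (k <= l)%nat -> gk p l <= gk p k.
Proof. intros. destruct (Nat.eq_dec k l). subst; lra. left; apply gk_lt; auto; lia. Qed.
Lemma Kf_pos p j : 0 < Kf p j.
Proof. apply gk_pos. Qed.

Lemma cc_eq k X : X / (2 * INR k + 1) - X / (2 * INR (S k) + 1) = cc k * X.
Proof. rewrite S_INR. unfold cc. pose proof (pos_INR k). field. split; lra. Qed.

Definition ind (c : Z) (r : nat) (m : Z) : bool := (Z.abs (m - c) <=? Z.of_nat r)%Z.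

Lemma window_embed h c r L : (Z.abs c + Z.of_nat r <= Z.of_nat L)%Z ->
  sI (fun m => if ind c r m then h m else 0) (- Z.of_nat L) (2*L+1) = sI h (c - Z.of_nat r) (2*r+1).
Proof.
  intros H. set (d1 := Z.to_nat (c - Z.of_nat r + Z.of_nat L)).
  set (d3 := (2*L+1 - d1 - (2*r+1))%nat).
  replace (2*L+1)%nat with (d1 + ((2*r+1) + d3))%nat by (unfold d3, d1; lia).
  rewrite (sI_split _ _ d1), (sI_split _ _ (2*r+1) d3).
  rewrite (sI_ext_in _ (fun _ => 0) _ d1), sI_zero.
  2:{ intros k Hk. unfold ind. destruct (Z.leb_spec (Z.abs (- Z.of_nat L + Z.of_nat k - c)) (Z.of_nat r)); auto.
      unfold d1 in Hk. lia. }
  rewrite (sI_ext_in _ (fun _ => 0) _ d3), sI_zero.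
  2:{ intros k Hk. unfold ind. destruct (Z.leb_spec (Z.abs (- Z.of_nat L + Z.of_nat d1 + Z.of_nat (2 * r + 1) + Z.of_nat k - c)) (Z.of_nat r)); auto.
      unfold d1 in *. lia. }
  replace (- Z.of_nat L + Z.of_nat d1)%Z with (c - Z.of_nat r)%Z by (unfold d1; lia).
  rewrite Rplus_0_l, Rplus_0_r. apply sI_ext_in. intros k Hk. unfold ind.
  destruct (Z.leb_spec (Z.abs (c - Z.of_nat r + Z.of_nat k - c)) (Z.of_nat r)); auto. lia.
Qed.

Definition Dd (p : R) (f : Z -> R) (n : Z) : R := rpow (Rabs (maxf f (n+1)%Z - maxf f n)) p.
Definition Ec (c : Z) (r : nat) (p : R) (m : Z) : R := if ind c r m then gk p r else 0.

Lemma Ec_nonneg c r p m : 0 <= Ec c r p m.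
Proof. unfold Ec. destruct (ind c r m). left; apply gk_pos. lra. Qed.

Lemma edge_bound p f n c r : 0 < p <= 1 ->
  Rabs (maxf f (n+1)%Z - maxf f n) <= cc r * sI (af f) (c - Z.of_nat r) (2*r+1) ->
  forall L, (Z.abs c + Z.of_nat r <= Z.of_nat L)%Z ->
  Dd p f n <= sI (fun m => Ec c r p m * wf p f m) (- Z.of_nat L) (2*L+1).
Proof.
  intros Hp H L HL. unfold Dd.
  eapply Rle_trans. apply rpow_le. lra. split. apply Rabs_pos. apply H.
  rewrite <- sI_scal. rewrite <- (window_embed (fun z => cc r * af f z) c r L HL).
  eapply Rle_trans. apply sI_rpow. auto.
  intros z. destruct (ind c r z). apply Rmult_le_pos. left; apply cc_pos. apply af_nonneg. lra.
  right. apply sI_ext. intros z. unfold Ec. destruct (ind c r z).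
  rewrite rpow_mult. reflexivity. left; apply cc_pos. apply af_nonneg.
  rewrite rpow_le0; lra.
Qed.

Lemma avg_le_maxf f n r : (exists r0, forall r, avg f n r <= avg f n r0) -> avg f n r <= maxf f n.
Proof. intros [r0 H]. rewrite (maxf_attained f n r0 H). auto. Qed.

Lemma up_case f n r : (exists r0, forall r, avg f n r <= avg f n r0) ->
  maxf f n <= maxf f (n+1)%Z -> maxf f (n+1)%Z = avg f (n+1)%Z r ->
  Rabs (maxf f (n+1)%Z - maxf f n) <= cc r * sI (af f) (n + 1 - Z.of_nat r) (2*r+1).
Proof.
  intros Ha Hle Heq. rewrite Rabs_right by lra.
  pose proof (avg_le_maxf f n (S r) Ha) as H1.
  rewrite Heq. rewrite !avg_sI in *.
  set (X := sI (af f) (n + 1 - Z.of_nat r) (2 * r + 1)).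
  assert (X <= sI (af f) (n - Z.of_nat (S r)) (2 * S r + 1)).
  { apply sI_sub. apply af_nonneg. lia. lia. }
  assert (0 < 2 * INR (S r) + 1) by (pose proof (pos_INR (S r)); lra).
  assert (/ (2 * INR (S r) + 1) * X <= maxf f n).
  { eapply Rle_trans; [|apply H1]. apply Rmult_le_compat_l. left; apply Rinv_0_lt_compat; auto. auto. }
  rewrite <- cc_eq. unfold Rdiv. replace (n + 1 - Z.of_nat r)%Z with (n + 1 - Z.of_nat r)%Z by lia.
  fold X. lra.
Qed.

Lemma down_case f n r : (exists r0, forall r, avg f (n+1)%Z r <= avg f (n+1)%Z r0) ->
  maxf f (n+1)%Z <= maxf f n -> maxf f n = avg f n r ->
  Rabs (maxf f (n+1)%Z - maxf f n) <= cc r * sI (af f) (n - Z.of_nat r) (2*r+1).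
Proof.
  intros Ha Hle Heq. rewrite Rabs_left1 by lra.
  pose proof (avg_le_maxf f (n+1)%Z (S r) Ha) as H1.
  rewrite Heq. rewrite !avg_sI in *.
  set (X := sI (af f) (n - Z.of_nat r) (2 * r + 1)).
  assert (X <= sI (af f) (n + 1 - Z.of_nat (S r)) (2 * S r + 1)).
  { apply sI_sub. apply af_nonneg. lia. lia. }
  assert (0 < 2 * INR (S r) + 1) by (pose proof (pos_INR (S r)); lra).
  assert (/ (2 * INR (S r) + 1) * X <= maxf f (n+1)%Z).
  { eapply Rle_trans; [|apply H1]. apply Rmult_le_compat_l. left; apply Rinv_0_lt_compat; auto. auto. }
  rewrite <- cc_eq. unfold Rdiv. fold X. lra.
Qed.

Lemma coef_up p n r m : 0 < p -> Ec (n+1)%Z r p m <= Kf p (m - n) /\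
  (m <> (n + 1 + Z.of_nat r)%Z -> Ec (n+1)%Z r p m < Kf p (m - n)%Z).
Proof.
  intros Hp. unfold Ec, ind, Kf. destruct (Z.leb_spec (Z.abs (m - (n + 1))) (Z.of_nat r)).
  2:{ split; [left|intros]; apply gk_pos. }
  unfold dist. destruct (Z.leb_spec (m - n) 0).
  - split. apply gk_le; auto; lia. intros. apply gk_lt; auto; lia.
  - split. apply gk_le; auto; lia. intros. apply gk_lt; auto; lia.
Qed.
Lemma coef_down p n r m : 0 < p -> Ec n r p m <= Kf p (m - n) /\
  (m <> (n - Z.of_nat r)%Z -> Ec n r p m < Kf p (m - n)%Z).
Proof.
  intros Hp. unfold Ec, ind, Kf. destruct (Z.leb_spec (Z.abs (m - n)) (Z.of_nat r)).
  2:{ split; [left|intros]; apply gk_pos. }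
  unfold dist. destruct (Z.leb_spec (m - n) 0).
  - split. apply gk_le; auto; lia. intros. apply gk_lt; auto; lia.
  - split. apply gk_le; auto; lia. intros. apply gk_lt; auto; lia.
Qed.

Lemma edge p f n : 0 < p <= 1 -> (forall n, exists r0, forall r, avg f n r <= avg f n r0) ->
  exists c r ms,
    (forall L, (Z.abs c + Z.of_nat r <= Z.of_nat L)%Z ->
       Dd p f n <= sI (fun m => Ec c r p m * wf p f m) (- Z.of_nat L) (2*L+1)) /\
    (forall m, Ec c r p m <= Kf p (m - n)) /\
    (forall m, m <> ms -> Ec c r p m < Kf p (m - n)).
Proof.
  intros Hp Ha. destruct (Rle_dec (maxf f n) (maxf f (n+1)%Z)) as [Hle|Hle].
  - destruct (Ha (n+1)%Z) as [r Hr]. exists (n+1)%Z, r, (n + 1 + Z.of_nat r)%Z.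
    split. apply edge_bound; auto. replace (n + 1 - Z.of_nat r)%Z with (n + 1 - Z.of_nat r)%Z by lia.
    apply up_case; auto. apply maxf_attained; auto.
    split; intros m; [|intros Hm]; apply coef_up; lra || auto.
  - destruct (Ha n) as [r Hr]. exists n, r, (n - Z.of_nat r)%Z.
    split. apply edge_bound; auto. apply down_case; auto. lra. apply maxf_attained; auto.
    split; intros m; [|intros Hm]; apply coef_down; lra || auto.
Qed.

Definition PP (p : R) (M : nat) : R := sum_n (gk p) M.

Lemma Ksum_exact p M : sI (Kf p) (- Z.of_nat M) (2*M+2) = 2 * PP p M.
Proof.
  replace (2*M+2)%nat with ((M+1) + (M+1))%nat by lia. rewrite sI_split.
  unfold PP. rewrite sum_n_sI. replace (S M) with (M+1)%nat by lia.
  assert (E1 : sI (Kf p) (- Z.of_nat M) (M + 1) = sI (fun z => gk p (Z.to_nat z)) 0 (M+1)).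
  { pose proof (sI_refl (Kf p) 0 0 (M+1)) as H.
    replace (0 - 0 - Z.of_nat (M + 1) + 1)%Z with (- Z.of_nat M)%Z in H by lia.
    rewrite <- H. apply sI_ext_in. intros k Hk. unfold Kf, dist.
    destruct (Z.leb_spec (0 - (0 + Z.of_nat k)) 0); [|lia]. f_equal. lia. }
  assert (E2 : sI (Kf p) (- Z.of_nat M + Z.of_nat (M + 1)) (M + 1) = sI (fun z => gk p (Z.to_nat z)) 0 (M+1)).
  { rewrite (sI_shift _ _ _ 1%Z). replace (- Z.of_nat M + Z.of_nat (M + 1) - 1)%Z with 0%Z by lia.
    apply sI_ext_in. intros k Hk. unfold Kf, dist.
    destruct (Z.leb_spec (0 + Z.of_nat k + 1) 0); [lia|]. f_equal. lia. }
  rewrite E1, E2. ring.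
Qed.

Lemma Kf_nonneg p j : 0 <= Kf p j.
Proof. left; apply Kf_pos. Qed.

Lemma PP_nonneg p M : 0 <= PP p M.
Proof. unfold PP. rewrite sum_n_sI. apply sI_nonneg. intros; left; apply gk_pos. Qed.
Lemma PP_mono p M : PP p M <= PP p (S M).
Proof. unfold PP. rewrite sum_Sn. unfold plus; simpl. pose proof (gk_pos p (S M)). lra. Qed.
Lemma PP_mono' p M M' : (M <= M')%nat -> PP p M <= PP p M'.
Proof. induction 1. lra. eapply Rle_trans; eauto. apply PP_mono. Qed.

Lemma Ksum_bound p m N L : (Z.abs m <= Z.of_nat L)%Z ->
  sI (fun n => Kf p (m - n)) (- Z.of_nat N) (2*N+1) <= 2 * PP p (N + L).
Proof.
  intros Hm. rewrite sI_refl. rewrite <- Ksum_exact. apply sI_sub. apply Kf_nonneg. lia. lia.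
Qed.

Lemma fin_common (P : nat -> nat -> Prop) len :
  (forall k, (k < len)%nat -> exists L, forall L', (L <= L')%nat -> P k L') ->
  exists L, forall k, (k < len)%nat -> forall L', (L <= L')%nat -> P k L'.
Proof.
  induction len; intros H. exists O; intros; lia.
  destruct IHlen as [L1 H1]. intros; apply H; lia.
  destruct (H len ltac:(lia)) as [L2 H2]. exists (Nat.max L1 L2).
  intros k Hk L' HL'. destruct (Nat.eq_dec k len). subst. apply H2; lia. apply H1; lia.
Qed.

Lemma main_finite p f S delta : 0 < p <= 1 -> sumZ (wf p f) = Finite S ->
  (forall n, exists r0, forall r, avg f n r <= avg f n r0) ->
  0 <= delta ->
  (exists L0, forall L, (L0 <= L)%nat ->
     Dd p f 0 + delta <= sI (fun m => Kf p (m - 0) * wf p f m) (- Z.of_nat L) (2*L+1)) ->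
  forall N, exists M, SZ (Dd p f) N + delta <= 2 * PP p M * S.
Proof.
  intros Hp HS Ha Hd [L0 H0] N.
  set (B := fun n L => sI (fun m => Kf p (m - n) * wf p f m) (- Z.of_nat L) (2*L+1)).
  set (dl := fun n : Z => if (n =? 0)%Z then delta else 0).
  assert (Hn : forall n, exists L, forall L', (L <= L')%nat -> Dd p f n + dl n <= B n L').
  { intros n. unfold dl. destruct (Z.eqb_spec n 0).
    - subst. exists L0. apply H0.
    - destruct (edge p f n Hp Ha) as [c [r [ms [E1 [E2 _]]]]].
      exists (Z.to_nat (Z.abs c + Z.of_nat r)). intros L' HL'.
      rewrite Rplus_0_r. eapply Rle_trans. apply (E1 L'). lia.
      apply sI_le. intros k _. apply Rmult_le_compat_r. apply wf_nonneg. apply E2. }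
  destruct (fin_common (fun k L => Dd p f (- Z.of_nat N + Z.of_nat k)%Z + dl (- Z.of_nat N + Z.of_nat k)%Z <=
                                 B (- Z.of_nat N + Z.of_nat k)%Z L) (2*N+1)) as [L HL].
  { intros k _. apply Hn. }
  exists (N + L)%nat.
  assert (Hsd : sI dl (- Z.of_nat N) (2*N+1) = delta).
  { rewrite (sI_single dl _ _ 0). unfold dl; simpl; auto. intros z Hz. unfold dl.
    destruct (Z.eqb_spec z 0); auto; lia. lia. }
  assert (H1 : SZ (Dd p f) N + delta <= sI (fun n => B n L) (- Z.of_nat N) (2*N+1)).
  { unfold SZ. rewrite <- Hsd at 1. rewrite <- sI_plus. apply sI_le. intros k Hk. apply HL; auto. }
  eapply Rle_trans. apply H1. unfold B. rewrite sI_swap.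
  apply Rle_trans with (sI (fun m => 2 * PP p (N + L) * wf p f m) (- Z.of_nat L) (2*L+1)).
  - apply sI_le. intros k Hk.
    rewrite (sI_ext _ (fun n => wf p f (- Z.of_nat L + Z.of_nat k)%Z * Kf p ((- Z.of_nat L + Z.of_nat k) - n)%Z)).
    2:{ intros; ring. }
    rewrite sI_scal, Rmult_comm. apply Rmult_le_compat_r. apply wf_nonneg.
    apply Ksum_bound. lia.
  - rewrite sI_scal. apply Rmult_le_compat_l. pose proof (PP_nonneg p (N+L)); lra.
    apply (SZ_le_sumZ (wf p f) S L). intros; apply wf_nonneg. auto.
Qed.

Lemma Rbar_mult_pinf_l x : 0 < x -> Rbar_mult p_infty (Finite x) = p_infty.
Proof. intros H. unfold Rbar_mult, Rbar_mult'. destruct (Rle_dec 0 x); [|lra].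
  destruct (Rle_lt_or_eq_dec 0 x r); auto. lra. Qed.
Lemma Rbar_mult_pinf_r x : 0 < x -> Rbar_mult (Finite x) p_infty = p_infty.
Proof. intros H. unfold Rbar_mult, Rbar_mult'. destruct (Rle_dec 0 x); [|lra].
  destruct (Rle_lt_or_eq_dec 0 x r); auto. lra. Qed.

Lemma gk_eq p k : rpow 2 p / (rpow (2 * INR k + 1) p * rpow (2 * INR k + 3) p) = gk p k.
Proof.
  unfold gk, cc. pose proof (pos_INR k).
  assert (Ha : 0 < 2 * INR k + 1) by lra. assert (Hb : 0 < 2 * INR k + 3) by lra.
  assert (Hab : 0 < (2 * INR k + 1) * (2 * INR k + 3)) by nra.
  assert (H2 : 0 < 2 / ((2 * INR k + 1) * (2 * INR k + 3))) by (apply Rdiv_lt_0_compat; lra).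
  rewrite !rpow_pos by lra.
  rewrite (Rpower_mult_distr (2 * INR k + 1)) by lra.
  assert (E : Rpower 2 p = Rpower (2 / ((2 * INR k + 1) * (2 * INR k + 3))) p * Rpower ((2 * INR k + 1) * (2 * INR k + 3)) p).
  { rewrite Rpower_mult_distr by lra. f_equal. field. lra. }
  rewrite E. pose proof (Rpower_pos ((2 * INR k + 1) * (2 * INR k + 3)) p). field. lra.
Qed.

Lemma sumN_PP p : sumN (fun k => rpow 2 p / (rpow (2 * INR k + 1) p * rpow (2 * INR k + 3) p)) = Lim_seq (PP p).
Proof. unfold sumN, PP. apply Lim_seq_ext. intros N. apply sum_n_ext. intros. apply gk_eq. Qed.

Lemma PP_cases p : (exists G, Lim_seq (PP p) = Finite G /\ 0 < G /\ forall M, PP p M <= G) \/ Lim_seq (PP p) = p_infty.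
Proof.
  assert (Hex : ex_lim_seq (PP p)) by (apply ex_lim_seq_incr; apply PP_mono).
  pose proof (Lim_seq_correct _ Hex) as Hl.
  assert (H2 : Rbar_le (Lim_seq (fun _ => PP p O)) (Lim_seq (PP p))).
  { apply Lim_seq_le_loc. exists O. intros n _. apply PP_mono'. lia. }
  rewrite Lim_seq_const in H2.
  assert (0 < PP p O) by (unfold PP; rewrite sum_O; apply gk_pos).
  destruct (Lim_seq (PP p)) as [G| |] eqn:E; simpl in H2; try contradiction; auto.
  left. exists G. repeat split; try lra. apply is_lim_seq_incr_compare; auto. apply PP_mono.
Qed.

Lemma edge_K p f n : 0 < p <= 1 -> (forall n, exists r0, forall r, avg f n r <= avg f n r0) ->
  exists L0, forall L, (L0 <= L)%nat ->
   Dd p f n + 0 <= sI (fun m => Kf p (m - n) * wf p f m) (- Z.of_nat L) (2*L+1).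
Proof.
  intros Hp Ha. destruct (edge p f n Hp Ha) as [c [r [ms [E1 [E2 _]]]]].
  exists (Z.to_nat (Z.abs c + Z.of_nat r)). intros L' HL'.
  rewrite Rplus_0_r. eapply Rle_trans. apply (E1 L'). lia.
  apply sI_le. intros k _. apply Rmult_le_compat_r. apply wf_nonneg. apply E2.
Qed.

Lemma edge_strict p f m1 m2 : 0 < p <= 1 -> (forall n, exists r0, forall r, avg f n r <= avg f n r0) ->
  m1 <> m2 -> f m1 <> 0 -> f m2 <> 0 ->
  exists delta, 0 < delta /\ exists L0, forall L, (L0 <= L)%nat ->
   Dd p f 0 + delta <= sI (fun m => Kf p (m - 0) * wf p f m) (- Z.of_nat L) (2*L+1).
Proof.
  intros Hp Ha H12 H1 H2. destruct (edge p f 0 Hp Ha) as [c [r [ms [E1 [E2 E3]]]]].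
  assert (Hmi : exists mi, mi <> ms /\ f mi <> 0 /\ (Z.abs mi <= Z.abs m1 + Z.abs m2)%Z).
  { destruct (Z.eq_dec m1 ms). exists m2. split. congruence. split; auto. lia.
    exists m1. split; auto. split; auto. lia. }
  destruct Hmi as [mi [Hmi1 [Hmi2 Hmi3]]].
  set (L1 := Z.to_nat (Z.abs c + Z.of_nat r + Z.abs m1 + Z.abs m2)).
  set (G := fun m => (Kf p (m - 0) - Ec c r p m) * wf p f m).
  assert (HG : forall z, 0 <= G z).
  { intros z. unfold G. apply Rmult_le_pos. specialize (E2 z). lra. apply wf_nonneg. }
  exists (sI G (- Z.of_nat L1) (2*L1+1)). split.
  - rewrite <- (sI_zero (- Z.of_nat L1) (2*L1+1)). apply sI_lt. intros; apply HG.
    exists (Z.to_nat (mi + Z.of_nat L1)). split. unfold L1; lia.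
    replace (- Z.of_nat L1 + Z.of_nat (Z.to_nat (mi + Z.of_nat L1)))%Z with mi by (unfold L1; lia).
    unfold G. apply Rmult_lt_0_compat. specialize (E3 mi Hmi1). lra.
    apply rpow_gt0. apply Rabs_pos_lt; auto.
  - exists L1. intros L HL.
    assert (sI G (- Z.of_nat L1) (2*L1+1) <= sI G (- Z.of_nat L) (2*L+1)) by (apply sI_sub; auto; lia).
    assert (Dd p f 0 <= sI (fun m => Ec c r p m * wf p f m) (- Z.of_nat L) (2*L+1)) by (apply E1; unfold L1 in HL; lia).
    assert (sI G (- Z.of_nat L) (2*L+1) = sI (fun m => Kf p (m - 0) * wf p f m) (- Z.of_nat L) (2*L+1)
             - sI (fun m => Ec c r p m * wf p f m) (- Z.of_nat L) (2*L+1)).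
    { rewrite <- sI_minus. apply sI_ext. intros; unfold G; ring. }
    lra.
Qed.

Lemma lp_S p f : in_lp p f -> sumZ (wf p f) = Finite (real (lp_sum p f)) /\ 0 <= real (lp_sum p f).
Proof.
  intros H. unfold in_lp in H. split. unfold lp_sum in *. symmetry. apply H.
  rewrite <- H. apply Rle_trans with (SZ (wf p f) O). apply SZ_nonneg; intros; apply wf_nonneg.
  apply SZ_le_sumZ. intros; apply wf_nonneg. unfold lp_sum in *. symmetry. apply H.
Qed.

Lemma var_bound p f : 0 < p <= 1 -> in_lp p f ->
  forall delta, 0 <= delta ->
  (exists L0, forall L, (L0 <= L)%nat ->
     Dd p f 0 + delta <= sI (fun m => Kf p (m - 0) * wf p f m) (- Z.of_nat L) (2*L+1)) ->
  forall G, (forall M, PP p M <= G) ->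
  exists V, sumZ (Dd p f) = Finite V /\ 0 <= V /\ V + delta <= 2 * G * real (lp_sum p f).
Proof.
  intros Hp Hf delta Hd H0 G HG. destruct (lp_S p f Hf) as [HS HS0].
  pose proof (attain_lp p f Hp Hf) as Ha.
  destruct (sumZ_bounded (Dd p f) (2 * G * real (lp_sum p f) - delta)) as [V [H1 [H2 H3]]].
  intros; apply rpow_nonneg.
  intros N. destruct (main_finite p f _ delta Hp HS Ha Hd H0 N) as [M HM].
  assert (PP p M * real (lp_sum p f) <= G * real (lp_sum p f)) by (apply Rmult_le_compat_r; auto).
  nra.
  exists V. repeat split; auto. lra.
Qed.

Section Delta.
Variables (p : R) (f : Z -> R) (m : Z) (c : R).
Hypothesis Hp : 0 < p <= 1.
Hypothesis Hc : c <> 0.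
Hypothesis Hf : forall n, f n = if Z.eqb n m then c else 0.

Lemma d_lp : lp_sum p f = Finite (rpow (Rabs c) p).
Proof.
  unfold lp_sum. fold (wf p f). rewrite sumZ_SZ.
  rewrite <- (Lim_seq_const (rpow (Rabs c) p)). apply Lim_seq_ext_loc.
  exists (Z.to_nat (Z.abs m)). intros N HN. unfold SZ. rewrite (sI_single _ _ _ m).
  unfold wf. rewrite Hf, Z.eqb_refl. auto.
  intros z Hz. unfold wf. rewrite Hf. destruct (Z.eqb_spec z m). contradiction.
  rewrite Rabs_R0. apply rpow_le0; lra. lia.
Qed.
Lemma d_in : in_lp p f.
Proof. unfold in_lp. rewrite d_lp. reflexivity. Qed.
Lemma d_norm : lp_norm p f = Finite (Rabs c).
Proof. unfold lp_norm. rewrite d_lp. simpl. rewrite rpow_inv. auto. lra. apply Rabs_pos. Qed.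

Lemma d_avg n r : avg f n r = if (Z.abs (n - m) <=? Z.of_nat r)%Z then Rabs c / (2 * INR r + 1) else 0.
Proof.
  rewrite avg_sI. destruct (Z.leb_spec (Z.abs (n - m)) (Z.of_nat r)).
  - rewrite (sI_single _ _ _ m). unfold af. rewrite Hf, Z.eqb_refl. unfold Rdiv. ring.
    intros z Hz. unfold af. rewrite Hf. destruct (Z.eqb_spec z m). contradiction. apply Rabs_R0. lia.
  - rewrite (sI_ext_in _ (fun _ => 0)), sI_zero. ring.
    intros k Hk. unfold af. rewrite Hf. destruct (Z.eqb_spec (n - Z.of_nat r + Z.of_nat k) m). lia. apply Rabs_R0.
Qed.

Lemma d_maxf n : maxf f n = Rabs c / (2 * INR (Z.to_nat (Z.abs (n - m))) + 1).
Proof.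
  rewrite (maxf_attained f n (Z.to_nat (Z.abs (n - m)))).
  - rewrite d_avg. destruct (Z.leb_spec (Z.abs (n - m)) (Z.of_nat (Z.to_nat (Z.abs (n - m))))). auto. lia.
  - intros r. rewrite !d_avg. destruct (Z.leb_spec (Z.abs (n - m)) (Z.of_nat (Z.to_nat (Z.abs (n - m))))); [|lia].
    pose proof (Rabs_pos c). pose proof (pos_INR (Z.to_nat (Z.abs (n - m)))).
    destruct (Z.leb_spec (Z.abs (n - m)) (Z.of_nat r)).
    + unfold Rdiv. apply Rmult_le_compat_l; auto. apply Rinv_le_contravar. lra.
      assert (INR (Z.to_nat (Z.abs (n - m))) <= INR r) by (apply le_INR; lia). lra.
    + apply Rdiv_le_0_compat; lra.
Qed.

Lemma d_D n : Dd p f n = rpow (Rabs c) p * Kf p (m - n).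
Proof.
  unfold Dd, Kf, gk. rewrite !d_maxf. rewrite <- rpow_mult by (try apply Rabs_pos; left; apply cc_pos).
  f_equal. unfold dist. destruct (Z.leb_spec (m - n) 0).
  - replace (Z.to_nat (Z.abs (n + 1 - m))) with (S (Z.to_nat (- (m - n)))) by lia.
    replace (Z.to_nat (Z.abs (n - m))) with (Z.to_nat (- (m - n))) by lia.
    set (k := Z.to_nat (- (m - n))). pose proof (cc_eq k (Rabs c)) as E. rewrite (Rmult_comm (cc k)) in E.
    pose proof (cc_pos k). pose proof (Rabs_pos c). assert (0 <= Rabs c * cc k) by nra.
    rewrite Rabs_left1 by lra. lra.
  - replace (Z.to_nat (Z.abs (n + 1 - m))) with (Z.to_nat (m - n - 1)) by lia.
    replace (Z.to_nat (Z.abs (n - m))) with (S (Z.to_nat (m - n - 1))) by lia.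
    set (k := Z.to_nat (m - n - 1)). pose proof (cc_eq k (Rabs c)) as E. rewrite (Rmult_comm (cc k)) in E.
    pose proof (cc_pos k). pose proof (Rabs_pos c). assert (0 <= Rabs c * cc k) by nra.
    rewrite Rabs_right by lra. lra.
Qed.

Definition Tm (N : nat) : R := sI (Kf p) (m - Z.of_nat N) (2*N+1).

Lemma d_T : Lim_seq Tm = Rbar_mult 2 (Lim_seq (PP p)).
Proof.
  set (a := Z.to_nat (Z.abs m)).
  rewrite <- Lim_seq_scal_l. apply Rbar_le_antisym.
  - rewrite <- (Lim_seq_incr_n (fun N => 2 * PP p N) a).
    apply Lim_seq_le_loc. exists O. intros N _. unfold Tm. rewrite <- Ksum_exact.
    apply sI_sub. apply Kf_nonneg. unfold a; lia. unfold a; lia.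
  - rewrite <- (Lim_seq_incr_n Tm (S a)).
    apply Lim_seq_le_loc. exists O. intros N _. unfold Tm. rewrite <- Ksum_exact.
    apply sI_sub. apply Kf_nonneg. unfold a; lia. unfold a; lia.
Qed.

Lemma d_sumD : sumZ (Dd p f) = Rbar_mult (rpow (Rabs c) p) (Rbar_mult 2 (Lim_seq (PP p))).
Proof.
  rewrite sumZ_SZ. rewrite <- d_T. rewrite <- Lim_seq_scal_l. apply Lim_seq_ext. intros N.
  unfold SZ, Tm. rewrite (sI_ext _ (fun n => rpow (Rabs c) p * Kf p (m - n))) by apply d_D.
  rewrite sI_scal. f_equal. rewrite sI_refl. f_equal. lia.
Qed.

Lemma d_var : Var_p p (maxf f) = Rbar_mult (Cp p) (lp_norm p f).
Proof.
  rewrite d_norm. unfold Var_p, Cp. fold (Dd p f). change (fun n : Z => rpow (Rabs (maxf f (n + 1) - maxf f n)) p) with (Dd p f).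
  rewrite d_sumD, sumN_PP.
  assert (HA : 0 < rpow (Rabs c) p) by (apply rpow_gt0, Rabs_pos_lt; auto).
  assert (Hc' : 0 < Rabs c) by (apply Rabs_pos_lt; auto).
  destruct (PP_cases p) as [[G [E [HG _]]]|E]; rewrite E; simpl.
  - f_equal. rewrite rpow_mult by lra. rewrite rpow_inv by lra. ring.
  - unfold Rbar_mult, Rbar_mult'. destruct (Rle_dec 0 2); [|lra].
    destruct (Rle_lt_or_eq_dec 0 2 r); [|lra]. simpl.
    destruct (Rle_dec 0 (rpow (Rabs c) p)); [|lra].
    destruct (Rle_lt_or_eq_dec 0 (rpow (Rabs c) p) r1); [|lra]. simpl.
    destruct (Rle_dec 0 (Rabs c)); [|lra].
    destruct (Rle_lt_or_eq_dec 0 (Rabs c) r3); [|lra]. reflexivity.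
Qed.
End Delta.

Lemma ln_ge z : 0 < z -> 1 - / z <= ln z.
Proof.
  intros Hz. pose proof (exp_ineq1_le (- ln z)). rewrite exp_Ropp, exp_ln in H by auto. lra.
Qed.

Lemma key_tel x t : 1 <= x -> 0 < t -> t * Rpower (x+1) (-1-t) <= Rpower x (-t) - Rpower (x+1) (-t).
Proof.
  intros Hx Ht. unfold Rpower.
  set (A := ln x). set (B := ln (x+1)).
  assert (HB : exp ((-1 - t) * B) = exp (-t * B) * / (x+1)).
  { replace ((-1 - t) * B) with (-t * B + - B) by ring. rewrite exp_plus, exp_Ropp. unfold B. rewrite exp_ln by lra. auto. }
  assert (HA : exp (-t * A) = exp (-t * B) * exp (t * (B - A))).
  { rewrite <- exp_plus. f_equal. ring. }
  assert (HBA : / (x+1) <= B - A).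
  { unfold A, B. rewrite <- ln_div by lra. pose proof (ln_ge ((x+1)/x) ltac:(apply Rdiv_lt_0_compat; lra)).
    replace (/ ((x+1)/x)) with (x / (x+1)) in H by (field; lra).
    replace (/ (x+1)) with (1 - x/(x+1)) by (field; lra). lra. }
  pose proof (exp_ineq1_le (t * (B - A))). pose proof (exp_pos (-t * B)).
  rewrite HB, HA.
  assert (t * / (x+1) <= t * (B - A)) by (apply Rmult_le_compat_l; lra).
  assert (exp (- t * B) * (t * / (x+1)) <= exp (-t * B) * (exp (t * (B - A)) - 1)) by (apply Rmult_le_compat_l; lra).
  nra.
Qed.

Lemma pseries_bound s : 1 < s -> forall M,
  sum_n (fun k => Rpower (INR k + 1) (- s)) M <= 1 + (1 / (s - 1)) * (1 - Rpower (INR M + 1) (-(s-1))).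
Proof.
  intros Hs. induction M.
  - rewrite sum_O. simpl. rewrite Rplus_0_l. unfold Rpower. rewrite ln_1, !Rmult_0_r, exp_0. lra.
  - rewrite sum_Sn. rewrite S_INR. unfold plus; simpl.
    pose proof (key_tel (INR M + 1) (s - 1) ltac:(pose proof (pos_INR M); lra) ltac:(lra)).
    idtac.
    replace (-1 - (s-1)) with (-s) in H by ring.
    assert (Hd : (s - 1) * (1 / (s-1)) = 1) by (field; lra).
    assert (0 < 1 / (s-1)) by (apply Rdiv_lt_0_compat; lra).
    assert (Rpower (INR M + 1 + 1) (- s) <= (1 / (s-1)) * (Rpower (INR M + 1) (- (s - 1)) - Rpower (INR M + 1 + 1) (- (s - 1)))).
    { apply Rmult_le_reg_l with (s - 1). lra. rewrite <- Rmult_assoc, Hd. lra. }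
    lra.
Qed.

Lemma gk_le_pow p k : 0 < p -> gk p k <= Rpower 2 p * Rpower (INR k + 1) (- (2 * p)).
Proof.
  intros Hp. unfold gk. pose proof (pos_INR k).
  apply Rle_trans with (rpow (2 * / ((INR k + 1) * (INR k + 1))) p).
  - apply rpow_le; auto. split. left; apply cc_pos. unfold cc, Rdiv. apply Rmult_le_compat_l. lra.
    apply Rinv_le_contravar. nra. nra.
  - rewrite rpow_mult. 2: lra. 2: left; apply Rinv_0_lt_compat; nra.
    rewrite !rpow_pos by (try apply Rinv_0_lt_compat; nra).
    apply Rmult_le_compat_l. left; apply Rpower_pos. right. unfold Rpower. f_equal.
    rewrite ln_Rinv by nra. rewrite ln_mult by lra. ring.
Qed.

Lemma PP_bounded p : 1/2 < p -> exists B, forall M, PP p M <= B.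
Proof.
  intros Hp. exists (Rpower 2 p * (1 + 1 / (2*p - 1))). intros M.
  unfold PP. apply Rle_trans with (sum_n (fun k => Rpower 2 p * Rpower (INR k + 1) (- (2 * p))) M).
  - rewrite !sum_n_sI. apply sI_le. intros. apply gk_le_pow. lra.
  - rewrite (sum_n_mult_l (K:=R_Ring)). unfold mult; simpl. apply Rmult_le_compat_l. left; apply Rpower_pos.
    eapply Rle_trans. apply pseries_bound. lra.
    assert (0 < 1 / (2*p-1)) by (apply Rdiv_lt_0_compat; lra).
    pose proof (Rpower_pos (INR M + 1) (- (2*p - 1))). nra.
Qed.

Lemma PP_finite p : 1/2 < p -> exists G, Lim_seq (PP p) = Finite G /\ 0 < G /\ forall M, PP p M <= G.
Proof.
  intros Hp. destruct (PP_cases p) as [H|H]; auto.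
  exfalso. destruct (PP_bounded p Hp) as [B HB].
  assert (Rbar_le (Lim_seq (PP p)) (Lim_seq (fun _ => B))) by (apply Lim_seq_le_loc; exists O; auto).
  rewrite H, Lim_seq_const in H0. simpl in H0. auto.
Qed.

Lemma Rbar_mult_1 x : Rbar_mult x (Finite 1) = x.
Proof.
  destruct x; simpl. f_equal; ring.
  all: unfold Rbar_mult, Rbar_mult'; destruct (Rle_dec 0 1); [|lra];
    destruct (Rle_lt_or_eq_dec 0 1 r); [reflexivity|lra].
Qed.

Lemma norm_eq p f : in_lp p f -> lp_norm p f = Finite (rpow (real (lp_sum p f)) (/p)).
Proof. intros Hf. unfold lp_norm. unfold in_lp, is_finite in Hf. rewrite <- Hf at 1. reflexivity. Qed.

Theorem theorem5p1 (p : R) (hp0 : 0 < p) (hp1 : p <= 1) :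
  (forall f : Z -> R, in_lp p f ->
     Rbar_le (Var_p p (maxf f)) (Rbar_mult (Cp p) (lp_norm p f)))
  /\
  (forall C : R, Rbar_lt (Finite C) (Cp p) ->
     exists f : Z -> R, in_lp p f /\
       Rbar_lt (Rbar_mult (Finite C) (lp_norm p f)) (Var_p p (maxf f)))
  /\
  (1 / 2 < p ->
   forall f : Z -> R, in_lp p f -> (exists n, f n <> 0) ->
     (Var_p p (maxf f) = Rbar_mult (Cp p) (lp_norm p f) <-> is_delta f)).
Proof.
  assert (Hp : 0 < p <= 1) by lra.
  assert (Hpi : 0 < / p) by (apply Rinv_0_lt_compat; lra).
  assert (HV : forall f, Var_p p (maxf f) = Rbar_rpow (sumZ (Dd p f)) (/p)) by reflexivity.
  assert (HC : Cp p = Rbar_rpow (Rbar_mult 2 (Lim_seq (PP p))) (/p)).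
  { unfold Cp. rewrite sumN_PP. reflexivity. }
  split; [|split].
  - intros f Hf. destruct (lp_S p f Hf) as [HS HS0].
    rewrite norm_eq by auto. rewrite HV.
    set (S := real (lp_sum p f)) in *.
    pose proof (attain_lp p f Hp Hf) as Ha.
    destruct (Req_dec S 0) as [HS1|HS1].
    + destruct (sumZ_bounded (Dd p f) 0) as [V [H1 [H2 H3]]].
      intros; apply rpow_nonneg.
      intros N. destruct (main_finite p f S 0 Hp HS Ha (Rle_refl 0) (edge_K p f 0 Hp Ha) N) as [M HM].
      rewrite HS1 in HM. lra.
      rewrite H1. rewrite HS1. rewrite (rpow_le0 0) by lra. rewrite Rbar_mult_0_r. simpl.
      replace V with 0 by lra. rewrite rpow_le0; lra.
    + destruct (PP_cases p) as [[G [E [HG HGM]]]|E].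
      * destruct (var_bound p f Hp Hf 0 (Rle_refl 0) (edge_K p f 0 Hp Ha) G HGM) as [V [H1 [H2 H3]]].
        rewrite H1, HC, E. simpl. fold S in H3. rewrite <- rpow_mult by lra.
        apply rpow_le; auto. lra.
      * rewrite HC, E, (Rbar_mult_pinf_r 2) by lra. change (Rbar_rpow p_infty (/p)) with p_infty. rewrite Rbar_mult_pinf_l. destruct (Rbar_rpow (sumZ (Dd p f)) (/p)); simpl; auto.
        apply rpow_gt0. lra.
  - intros C HCp. set (f0 := fun n : Z => if Z.eqb n 0 then 1 else 0).
    assert (Hf0 : forall n, f0 n = if Z.eqb n 0 then 1 else 0) by reflexivity.
    exists f0. split. apply (d_in p f0 0 1); auto; lra.
    rewrite (d_var p f0 0 1); auto; try lra. rewrite (d_norm p f0 0 1); auto; try lra.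
    rewrite Rabs_R1, !Rbar_mult_1. auto.
  - intros Hp2 f Hf [n0 Hn0]. split.
    + intros Heq. destruct (classic (is_delta f)) as [Hd|Hd]; auto. exfalso.
      assert (Hm : exists m, m <> n0 /\ f m <> 0).
      { apply NNPP; intro Hno. apply Hd. exists n0, (f n0). split; auto. intros n.
        destruct (Z.eqb_spec n n0). subst; auto. destruct (Req_dec (f n) 0); auto.
        exfalso; apply Hno; exists n; auto. }
      destruct Hm as [m [Hm1 Hm2]].
      pose proof (attain_lp p f Hp Hf) as Ha.
      destruct (edge_strict p f m n0 Hp Ha Hm1 Hm2 Hn0) as [delta [Hd0 HL]].
      destruct (PP_finite p Hp2) as [G [E [HG HGM]]].
      destruct (var_bound p f Hp Hf delta (Rlt_le _ _ Hd0) HL G HGM) as [V [H1 [H2 H3]]].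
      destruct (lp_S p f Hf) as [HS HS0].
      rewrite norm_eq, HV, H1, HC, E in Heq by auto. simpl in Heq.
      injection Heq as Heq. rewrite <- rpow_mult in Heq by lra.
      assert (rpow V (/p) < rpow (2 * G * real (lp_sum p f)) (/p)) by (apply rpow_lt; auto; lra).
      lra.
    + intros [m [c [Hc Hfm]]]. apply (d_var p f m c); auto.
Qed.
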